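(* There is an absolute constant $c>0$ such that for every $n\ge4$ that is a power of $4$ and every positive definite $A\in\mathbb{R}^{n\times n}$, \[\operatorname{Tr}(A)\cdot\max_{1\le i\le n}(v^i)^TA^{-1}v^i\ \ge\ c\,n\lg^2 n,\] where $v^i\in\mathbb{R}^n$ has its first $i$ coordinates equal to $1$ and its last $n-i$ coordinates equal to $0$. Moreover, for every power of $2$, $n\ge4$, the matrix $A$ with $A_{ij}=\lg n-k$ ($k$ the smallest nonnegative integer with $\lfloor (i-1)/2^k\rfloor=\lfloor (j-1)/2^k\rfloor$) satisfies $\operatorname{Tr}(A)\cdot\max_i (v^i)^TA^{-1}v^i\le n\lg^2 n$.
   Context: $\lg$ is the base-2 logarithm. *)

(* Defs.v *)
From HB Require Import structures.
From mathcomp Require Import all_boot all_order all_algebra.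
Set Implicit Arguments. Unset Strict Implicit. Unset Printing Implicit Defensive.
Import Order.TTheory GRing.Theory Num.Theory.

Definition lg (n : nat) : nat := trunc_log 2 n.

Local Open Scope ring_scope.

Definition posdef (R : realFieldType) (n : nat) (A : 'M[R]_n) : Prop :=
  A^T = A /\ forall x : 'cV[R]_n, x != 0 -> 0 < (x^T *m A *m x) 0 0.

Definition vvec (R : realFieldType) (n k : nat) : 'cV[R]_n :=
  \col_(j < n) (if (j < k)%N then 1 else 0).

Definition maxquad (R : rcfType) (n : nat) (A : 'M[R]_n) : R :=
  \big[Num.max/0]_(i < n) ((vvec R n i.+1)^T *m invmx A *m vvec R n i.+1) 0 0.

Local Close Scope ring_scope.

Lemma ex_common_level (i j : nat) : exists k, i %/ 2 ^ k == j %/ 2 ^ k.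
Proof.
exists (i + j).
have Hi : i < 2 ^ (i + j) by apply: (leq_trans (ltn_expl i (ltnSn 1))); rewrite leq_exp2l // leq_addr.
have Hj : j < 2 ^ (i + j) by apply: (leq_trans (ltn_expl j (ltnSn 1))); rewrite leq_exp2l // leq_addl.
by rewrite !divn_small.
Qed.

(* smallest k >= 0 with floor(i/2^k) = floor(j/2^k) (0-indexed i, j) *)
Definition level (i j : nat) : nat := ex_minn (ex_common_level i j).

Local Open Scope ring_scope.
Definition treeMatrix (R : rcfType) (n : nat) : 'M[R]_n :=
  \matrix_(i < n, j < n) ((lg n - level i j)%N)%:R.

(* Main.v *)
Require Import Defs.
From HB Require Import structures.
From mathcomp Require Import all_boot all_order all_algebra.
From mathcomp Require Import zify ring lra.
Set Implicit Arguments. Unset Strict Implicit. Unset Printing Implicit Defensive.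
Import Order.TTheory GRing.Theory Num.Theory.

Section File1.
Local Open Scope ring_scope.

Lemma sum_block (V : zmodType) (N D : nat) (F : nat -> V) :
  \sum_(0 <= i < N * D) F i = \sum_(0 <= P < N) \sum_(0 <= r < D) F (P * D + r)%N.
Proof.
elim: N => [|N IH]; first by rewrite mul0n !big_geq.
rewrite big_nat_recr //= -IH mulSn addnC (@big_cat_nat _ _ _ (N * D)) //=; last by rewrite ?leq_addr ?leq_addl.
congr (_ + _).
rewrite -{1}(add0n (N * D)%N) big_addn addKn.
by apply: eq_bigr => r _; rewrite addnC.
Qed.

Lemma sum_ind_eq (V : zmodType) (n a : nat) (F : nat -> V) : (a < n)%N ->
  \sum_(0 <= c < n) (if a == c then F c else 0) = F a.
Proof.
move=> Ha; rewrite (big_cat_nat _ (n:=a)) //=; last exact: ltnW.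
rewrite big_nat_cond big1 ?add0r; last first.
  by move=> i /andP[/andP[_ Hi] _]; rewrite eq_sym (ltn_eqF Hi).
rewrite big_ltn // eqxx big_nat_cond big1 ?addr0 //.
by move=> i /andP[/andP[Hi _] _]; rewrite (ltn_eqF Hi).
Qed.

Section Bridge.
Variables (R : rcfType) (n : nat) (A : 'M[R]_n).

Definition bil (x y : nat -> R) : R := \sum_(j < n) \sum_(l < n) x j * A j l * y l.
Definition qf (x : nat -> R) := bil x x.
Definition colv (x : nat -> R) : 'cV[R]_n := \col_(j < n) x j.

Lemma qfE x : qf x = ((colv x)^T *m A *m colv x) 0 0.
Proof.
rewrite /qf /bil /colv mxE exchange_big; apply: eq_bigr => l _.
rewrite !mxE big_distrl /=; apply: eq_bigr => j _.
by rewrite !mxE.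
Qed.

Hypothesis HA : posdef A.

Lemma qf_ge0 x : 0 <= qf x.
Proof.
rewrite qfE; have [->|nz] := eqVneq (colv x) 0.
  by rewrite mulmx0 mxE.
exact: ltW (HA.2 _ nz).
Qed.

Lemma posdef_unit : A \in unitmx.
Proof.
rewrite -row_free_unit -kermx_eq0; apply/negPn/negP => nz.
have [i Hi] : exists i, row i (kermx A) != 0.
  apply/existsP; move: nz; apply: contraR; rewrite negb_exists => /forallP H.
  by apply/eqP/row_matrixP => i; rewrite row0; apply/eqP/negPn.
have uA : row i (kermx A) *m A = 0 by apply/sub_kermxP; exact: row_sub.
have nz' : (row i (kermx A))^T != 0 by rewrite trmx_eq0.
have := HA.2 _ nz'; rewrite trmxK uA mul0mx mxE ltxx //.
Qed.

Lemma psd_col (Y : 'cV[R]_n) : 0 <= (Y^T *m A *m Y) 0 0.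
Proof.
have [->|nz] := eqVneq Y 0; first by rewrite mulmx0 mxE.
exact: ltW (HA.2 _ nz).
Qed.

Lemma tr11 (M : 'M[R]_1) : M^T 0 0 = M 0 0.
Proof. by rewrite mxE. Qed.

Lemma bridge (v X : 'cV[R]_n) :
  2 * (X^T *m v) 0 0 - (X^T *m A *m X) 0 0 <= (v^T *m invmx A *m v) 0 0.
Proof.
set Z := invmx A *m v.
have AZ : A *m Z = v by rewrite /Z mulmxA mulmxV ?mul1mx // posdef_unit.
have h0 := psd_col (X - Z).
have e1 : (X^T *m A *m Z) = X^T *m v by rewrite -mulmxA AZ.
have e2 : (Z^T *m A *m X) 0 0 = (X^T *m v) 0 0.
  by rewrite -tr11 !trmx_mul !trmxK HA.1 -/Z AZ.
have e3 : (Z^T *m A *m Z) 0 0 = (v^T *m invmx A *m v) 0 0.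
  by rewrite -mulmxA AZ -tr11 trmx_mul trmxK /Z mulmxA.
move: h0; rewrite (raddfB (@trmx R n 1)) /= !mulmxBl !mulmxBr e1.
move: e2 e3; set a := X^T *m A *m X; set b := X^T *m v; set c := Z^T *m A *m X.
set d := Z^T *m A *m Z; set e := v^T *m invmx A *m v.
rewrite !mxE => -> ->; lra.
Qed.

Lemma diag_pos (i : 'I_n) : 0 < A i i.
Proof.
have nz : delta_mx i (0 : 'I_1) != 0 :> 'cV[R]_n.
  by apply/negP => /eqP /matrixP /(_ i 0); rewrite !mxE !eqxx => /eqP; rewrite oner_eq0.
have := HA.2 _ nz; rewrite trmx_delta -rowE -colE !mxE //.
Qed.

Lemma tr_pos : (0 < n)%N -> 0 < \tr A.
Proof.
case: n A HA diag_pos => // n' A' HA' dp _.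
rewrite /mxtrace (bigD1 ord0) //=; apply: ltr_pwDl; first exact: dp.
by apply: sumr_ge0 => i _; apply: ltW.
Qed.

End Bridge.

Lemma vvec_dot (R : rcfType) n p (x : nat -> R) : (p <= n)%N ->
  ((colv n x)^T *m vvec R n p) 0 0 = \sum_(0 <= j < p) x j.
Proof.
move=> Hp; rewrite mxE.
transitivity (\sum_(j < n) (if (j < p)%N then x j else 0)).
  by apply: eq_bigr => j _; rewrite !mxE; case: ifP; rewrite ?mulr1 ?mulr0.
rewrite -(big_mkord xpredT (fun j => if (j < p)%N then x j else 0)).
rewrite (big_cat_nat _ (n:=p)) //=.
have -> : \sum_(p <= j < n) (if (j < p)%N then x j else 0) = 0.
  by rewrite big_nat_cond big1 // => j /andP[/andP[Hj _] _]; rewrite ltnNge Hj.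
by rewrite addr0; apply: eq_big_nat => j /andP[_ ->].
Qed.

Lemma le_maxquad (R : rcfType) n (A : 'M[R]_n) (i : 'I_n) :
  ((vvec R n i.+1)^T *m invmx A *m vvec R n i.+1) 0 0 <= maxquad A.
Proof. by rewrite /maxquad (bigD1 i) //= le_max lexx. Qed.


Lemma qf_scale (R : rcfType) n (A : 'M[R]_n) (c : R) (f : nat -> R) :
  qf A (fun j => c * f j) = c ^+ 2 * qf A f.
Proof.
rewrite /qf /bil mulr_sumr; apply: eq_bigr => j _; rewrite mulr_sumr.
by apply: eq_bigr => l _; rewrite expr2; ring.
Qed.

Lemma core (R : rcfType) n (A : 'M[R]_n) (HA : posdef A) (w : nat -> nat -> R) (K : R) :
  (0 < n)%N -> 0 < K ->
  \sum_(0 <= i < n) qf A (w i) <= K * \tr A ->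
  (\sum_(0 <= i < n) \sum_(0 <= j < i.+1) w i j) ^+ 2 <= K * n%:R * (\tr A * maxquad A).
Proof.
move=> n0 K0 HE.
set S := \sum_(0 <= i < n) _; set E := \sum_(0 <= i < n) _ in HE.
set T := \tr A; set t := maxquad A.
have T0 : 0 < T by exact: tr_pos.
have key : forall l, 2 * l * S - l ^+ 2 * E <= n%:R * t.
  move=> l.
  have -> : n%:R * t = \sum_(0 <= i < n) t by rewrite sumr_const_nat subn0 mulr_natl.
  rewrite /S /E mulr_sumr mulr_sumr -sumrB big_mkord [X in _ <= X]big_mkord.
  apply: ler_sum => i _.
  have := bridge HA (vvec R n i.+1) (colv n (fun j => l * w i j)).
  rewrite -qfE qf_scale vvec_dot // -mulr_sumr mulrA => H; apply: le_trans H _.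
  exact: le_maxquad.
have := key (S / (K * T)).
have KT0 : 0 < K * T by rewrite mulr_gt0.
have H1 : (S / (K * T)) ^+ 2 * E <= (S / (K * T)) ^+ 2 * (K * T).
  by apply: ler_wpM2l => //; rewrite sqr_ge0.
have e : 2 * (S / (K * T)) * S - (S / (K * T)) ^+ 2 * (K * T) = S ^+ 2 / (K * T).
  by field; rewrite !lt0r_neq0.
move=> H2.
have H3 : S ^+ 2 / (K * T) <= n%:R * t by rewrite -e; apply: le_trans H2; lra.
rewrite ler_pdivrMr // in H3.
apply: le_trans H3 _; rewrite le_eqVlt; apply/orP; left; apply/eqP; rewrite /T /t; ring.
Qed.

End File1.

Section File2.

Lemma divMD q a d r : 0 < d -> (q * (a * d) + r) %/ d = q * a + r %/ d.
Proof. by move=> d0; rewrite mulnA divnMDl. Qed.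

Lemma divS c B r : r < B -> (c * B + r) %/ B = c.
Proof. by move=> rB; rewrite divnMDl ?divn_small ?addn0 //; case: B rB. Qed.

Local Open Scope ring_scope.

Section Haar.
Variable R : rcfType.

Definition sg (b : bool) : R := if b then -1 else 1.


Lemma sum_sg_half B : (0 < B)%N -> \sum_(0 <= r < 2 * B) sg (odd (r %/ B)) = 0.
Proof.
move=> B0; rewrite sum_block big_nat_recr //= big_nat1.
rewrite (@eq_big_nat _ _ _ 0 B _ (fun _ => sg false)); last first.
  by move=> r /andP[_ Hr]; rewrite divS.
rewrite [X in _ + X](@eq_big_nat _ _ _ 0 B _ (fun _ => sg true)); last first.
  by move=> r /andP[_ Hr]; rewrite divS.
by rewrite !sumr_const_nat /sg -mulrnDl addrN mul0rn.
Qed.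

Lemma pre1 B u : (u < B)%N -> \sum_(0 <= r < u.+1) sg (odd (r %/ B)) = u.+1%:R.
Proof.
move=> uB; rewrite (@eq_big_nat _ _ _ 0 u.+1 _ (fun _ => 1)).
  by rewrite sumr_const_nat subn0.
by move=> r /andP[_ Hr]; rewrite divn_small //; apply: leq_trans Hr uB.
Qed.

Lemma pre0 B : \sum_(0 <= r < B) sg (odd (r %/ B)) = B%:R.
Proof.
rewrite (@eq_big_nat _ _ _ 0 B _ (fun _ => 1)).
  by rewrite sumr_const_nat subn0.
by move=> r /andP[_ Hr]; rewrite divn_small.
Qed.

Lemma pre2 B u : (u < B)%N ->
  \sum_(0 <= r < B + u.+1) sg (odd (r %/ B)) = B%:R - u.+1%:R.
Proof.
move=> uB; rewrite (big_cat_nat _ (n:=B)) //=; last by rewrite leq_addr.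
rewrite pre0; congr (_ + _); rewrite -{1}(add0n B) big_addn addKn.
rewrite (@eq_big_nat _ _ _ 0 u.+1 _ (fun _ => -1)).
  by rewrite sumr_const_nat subn0 -mulNrn.
move=> r /andP[_ Hr]; rewrite addnC -{1}(mul1n B) divS //; apply: leq_trans Hr uB.
Qed.

Lemma tent B : (0 < B)%N ->
  \sum_(0 <= s < 2 * B) \sum_(0 <= r < s.+1) sg (odd (r %/ B)) = (B * B)%:R.
Proof.
move=> B0; rewrite sum_block big_nat_recr //= big_nat1.
rewrite (@eq_big_nat _ _ _ 0 B _ (fun u => u.+1%:R)); last first.
  by move=> u /andP[_ Hu]; rewrite mul0n add0n pre1.
rewrite [X in _ + X](@eq_big_nat _ _ _ 0 B _ (fun u => B%:R - u.+1%:R)); last first.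
  by move=> u /andP[_ Hu]; rewrite mul1n -addnS pre2.
rewrite -big_split /=.
rewrite (@eq_big_nat _ _ _ 0 B _ (fun u => B%:R)); last by move=> u _; rewrite addrC subrK.
by rewrite sumr_const_nat subn0 natrM mulr_natr.
Qed.

Lemma Gsum B : (0 < B)%N ->
  \sum_(0 <= r < 4 * B) sg (odd (r %/ (2 * B))) *
     \sum_(0 <= v < r.+1) (if (v < 2 * B)%N then sg (odd (v %/ B)) else 0) = (B * B)%:R.
Proof.
move=> B0; have B2 : (0 < 2 * B)%N by rewrite muln_gt0.
rewrite (_ : (4 * B = 2 * (2 * B))%N); last by rewrite mulnA.
rewrite sum_block big_nat_recr //= big_nat1.
rewrite (@eq_big_nat _ _ _ 0 (2 * B) _
   (fun s => \sum_(0 <= r < s.+1) sg (odd (r %/ B)))); last first.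
  move=> s /andP[_ Hs]; rewrite mul0n add0n divn_small // mul1r.
  apply: eq_big_nat => v /andP[_ Hv]; rewrite (leq_trans Hv Hs) //.
rewrite tent //.
rewrite [X in _ + X](@eq_big_nat _ _ _ 0 (2 * B) _ (fun _ => 0)); last first.
  move=> s /andP[_ Hs]; rewrite divS // mul1n.
  rewrite -addnS (big_cat_nat _ (n:= (2 * B)%N)) //=; last by rewrite leq_addr.
  rewrite (@eq_big_nat _ _ _ 0 (2 * B) _ (fun v => sg (odd (v %/ B)))); last first.
    by move=> v /andP[_ ->].
  rewrite sum_sg_half // add0r big_nat_cond big1 ?mulr0 //.
  by move=> v /andP[/andP[Hv _] _]; rewrite ltnNge Hv.
by rewrite big1 ?addr0.
Qed.

Definition haar (B c j : nat) : R :=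
  if (j %/ (2 * B) == c)%N then sg (odd (j %/ B)) else 0.

Lemma oddP2 P x : odd (P * 2 + x) = odd x.
Proof. by rewrite oddD oddM andbF. Qed.
Lemma oddP4 P x : odd (P * 4 + x) = odd x.
Proof. by rewrite oddD oddM andbF. Qed.

Lemma Sk B N : (0 < B)%N ->
  \sum_(0 <= i < N * (4 * B)) sg (odd (i %/ (2 * B))) *
      \sum_(0 <= j < i.+1) haar B (2 * (i %/ (4 * B))) j = (N * (B * B))%:R.
Proof.
move=> B0; have B2 : (0 < 2 * B)%N by rewrite muln_gt0.
have B4 : (0 < 4 * B)%N by rewrite muln_gt0.
rewrite sum_block (@eq_big_nat _ _ _ 0 N _ (fun _ => (B * B)%:R)); last first.
  move=> P _; rewrite -(Gsum B0); apply: eq_big_nat => r /andP[_ Hr].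
  rewrite divS // {1}(_ : (4 * B = 2 * (2 * B))%N); last by rewrite mulnA.
  rewrite divMD // oddP2; congr (_ * _).
  rewrite -addnS (big_cat_nat _ (n:= (P * (4 * B))%N)) //=; last by rewrite leq_addr.
  rewrite big_nat_cond big1 ?add0r; last first.
    move=> j /andP[/andP[_ Hj] _]; rewrite /haar.
    have -> : (j %/ (2 * B) == 2 * P)%N = false.
      apply/negbTE; rewrite neq_ltn ltn_divLR //.
      by rewrite (_ : (2 * P * (2 * B) = P * (4 * B))%N) ?Hj //; ring.
    by [].
  rewrite -{1}(add0n (P * (4 * B))%N) big_addn addKn.
  apply: eq_big_nat => v /andP[_ Hv]; rewrite /haar addnC.
  rewrite {1}(_ : (4 * B = 2 * (2 * B))%N); last by rewrite mulnA.
  rewrite divMD // divMD // oddP4.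
  have -> : ((P * 2 + v %/ (2 * B)) == 2 * P)%N = (v < 2 * B)%N.
    by rewrite [X in (_ == X)%N]mulnC -{2}[(P*2)%N]addn0 eqn_add2l eqn0Ngt divn_gt0 // -ltnNge.
  by [].
by rewrite sumr_const_nat subn0 -mulrnA mulnC.
Qed.

Definition wv (m i j : nat) : R :=
  \sum_(0 <= k < m.-1) (2 ^ k)%:R^-1 * sg (odd (i %/ (2 * 2 ^ k))) *
      haar (2 ^ k) (2 * (i %/ (4 * 2 ^ k))) j.

Lemma Stot m : (2 <= m)%N ->
  \sum_(0 <= i < 2 ^ m) \sum_(0 <= j < i.+1) wv m i j = (m.-1 * 2 ^ (m - 2))%:R.
Proof.
move=> m2.
rewrite /wv; under eq_bigr => i _ do rewrite exchange_big_nat.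
rewrite exchange_big_nat /=.
rewrite (@eq_big_nat _ _ _ 0 m.-1 _ (fun _ => (2 ^ (m - 2))%:R)); last first.
  move=> k /andP[_ Hk].
  have p0 : (0 < 2 ^ k)%N by rewrite expn_gt0.
  have e : (2 ^ m = 2 ^ (m - k.+2) * (4 * 2 ^ k))%N.
    rewrite (_ : 4 = 2 ^ 2)%N // mulnA -!expnD.
    by rewrite (_ : (m - k.+2 + 2 + k = m)%N) //; lia.
  transitivity ((2 ^ k)%:R^-1 * (\sum_(0 <= i < 2 ^ m) sg (odd (i %/ (2 * 2 ^ k))) *
      \sum_(0 <= j < i.+1) haar (2 ^ k) (2 * (i %/ (4 * 2 ^ k))) j) : R).
    rewrite mulr_sumr; apply: eq_big_nat => i _; rewrite !mulr_sumr.
    by apply: eq_big_nat => j _; rewrite mulrA.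
  rewrite e Sk // mulnA natrM mulrC -mulrA mulfV ?pnatr_eq0 -?lt0n // mulr1 -expnD.
  by rewrite (_ : (m - k.+2 + k = m - 2)%N) //; lia.
by rewrite sumr_const_nat subn0 -mulrnA mulnC.
Qed.

End Haar.

End File2.

Section File3.

Lemma half_eq J L : J./2 = L./2 -> (J == L) = (odd J == odd L).
Proof.
move=> H; rewrite -{1}(odd_double_half J) -{1}(odd_double_half L) H.
by rewrite eqn_add2r; case: (odd J); case: (odd L).
Qed.

Local Open Scope ring_scope.

Section Energy.
Variables (R : rcfType) (n : nat) (A : 'M[R]_n).

Lemma bil_suml I (r : seq I) (f : I -> nat -> R) g :
  bil A (fun j => \sum_(k <- r) f k j) g = \sum_(k <- r) bil A (f k) g.
Proof.
rewrite /bil; under eq_bigr => j _ do under eq_bigr => l _ do rewrite !mulr_suml.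
under eq_bigr => j _ do rewrite exchange_big.
by rewrite exchange_big.
Qed.

Lemma bil_sumr I (r : seq I) (f : I -> nat -> R) g :
  bil A g (fun j => \sum_(k <- r) f k j) = \sum_(k <- r) bil A g (f k).
Proof.
rewrite /bil; under eq_bigr => j _ do under eq_bigr => l _ do rewrite !mulr_sumr.
under eq_bigr => j _ do rewrite exchange_big.
by rewrite exchange_big.
Qed.

Lemma bil_scal c d f g :
  bil A (fun j => c * f j) (fun j => d * g j) = c * d * bil A f g.
Proof.
rewrite /bil mulr_sumr; apply: eq_bigr => j _; rewrite mulr_sumr.
by apply: eq_bigr => l _; ring.
Qed.

Lemma bil_sym f g : A^T = A -> bil A f g = bil A g f.
Proof.
move=> HS; rewrite /bil exchange_big; apply: eq_bigr => l _; apply: eq_bigr => j _.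
by rewrite -{1}HS mxE; ring.
Qed.

Lemma qf_sum_kernel I (r : seq I) (f : I -> nat -> R) :
  \sum_(c <- r) qf A (f c) =
  \sum_(j < n) \sum_(l < n) A j l * \sum_(c <- r) f c j * f c l.
Proof.
rewrite /qf /bil exchange_big; apply: eq_bigr => j _.
rewrite exchange_big; apply: eq_bigr => l _.
by rewrite mulr_sumr; apply: eq_bigr => c _; ring.
Qed.

End Energy.

Lemma sum_single (V : zmodType) M k (X : nat -> V) : (k < M)%N ->
  (forall k', (k' < M)%N -> k' != k -> X k' = 0) -> \sum_(0 <= k' < M) X k' = X k.
Proof.
move=> kM H; rewrite -(sum_ind_eq X kM); apply: eq_big_nat => k' /andP[_ Hk'].
by case: eqP => [<-|/eqP ne] //; rewrite H // eq_sym.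
Qed.

Lemma ortho (R : rcfType) N B (F : nat -> R) : (0 < B)%N ->
  \sum_(0 <= i < N * (4 * B)) sg R (odd (i %/ (2 * B))) * F (i %/ (4 * B))%N = 0.
Proof.
move=> B0; have B2 : (0 < 2 * B)%N by rewrite muln_gt0.
have e4 : (4 * B = 2 * (2 * B))%N by rewrite mulnA.
rewrite sum_block big1_seq // => P _.
rewrite (@eq_big_nat _ _ _ 0 (4 * B) _ (fun r => F P * sg R (odd (r %/ (2 * B))))).
  by rewrite -mulr_sumr e4 sum_sg_half ?mulr0.
move=> r /andP[_ Hr]; rewrite divS // {1}e4.
by rewrite divMD // oddP2 mulrC.
Qed.


Lemma pow2E a b c : (a + b = c)%N -> (2 ^ a * 2 ^ b = 2 ^ c)%N.
Proof. by move=> <-; rewrite expnD. Qed.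
Lemma four_pow k : (4 * 2 ^ k = 2 ^ k.+2)%N.
Proof. by rewrite !expnS mulnA. Qed.
Lemma two_pow k : (2 * 2 ^ k = 2 ^ k.+1)%N.
Proof. by rewrite expnS. Qed.

Section Energy2.
Variables (R : rcfType) (m : nat) (A : 'M[R]_(2 ^ m)).
Hypothesis HS : A^T = A.

Definition uk (k i : nat) : nat -> R := fun j =>
  (2 ^ k)%:R^-1 * sg R (odd (i %/ (2 * 2 ^ k))) * haar R (2 ^ k) (2 * (i %/ (4 * 2 ^ k))) j.

Lemma cross k k' : (k < k')%N -> (k' < m.-1)%N ->
  \sum_(0 <= i < 2 ^ m) bil A (uk k i) (uk k' i) = 0.
Proof.
move=> kk' k'm.
have p0 : (0 < 2 ^ k)%N by rewrite expn_gt0.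
have e : (2 ^ m = 2 ^ (m - k.+2) * (4 * 2 ^ k))%N.
  by rewrite four_pow -expnD subnK //; lia.
have e1 : forall i, (i %/ (2 * 2 ^ k') = i %/ (4 * 2 ^ k) %/ 2 ^ (k' - k.+1))%N.
  move=> i; rewrite -divnMA four_pow two_pow -expnD.
  by rewrite (_ : (k.+2 + (k' - k.+1) = k'.+1)%N) //; lia.
have e2 : forall i, (i %/ (4 * 2 ^ k') = i %/ (4 * 2 ^ k) %/ 2 ^ (k' - k))%N.
  move=> i; rewrite -divnMA !four_pow -expnD.
  by rewrite (_ : (k.+2 + (k' - k) = k'.+2)%N) //; lia.
apply: eq_trans (ortho (2 ^ (m - k.+2)) (fun P => (2 ^ k)%:R^-1 * (2 ^ k')%:R^-1 *
   sg R (odd (P %/ 2 ^ (k' - k.+1))) *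
   bil A (haar R (2 ^ k) (2 * P)) (haar R (2 ^ k') (2 * (P %/ 2 ^ (k' - k))))) p0); rewrite -e.
apply: eq_bigr => i _; rewrite /uk bil_scal e1 e2; ring.
Qed.

Lemma sg2 b : sg R b * sg R b = 1.
Proof. by case: b; rewrite /sg ?mulrNN mulr1. Qed.

Lemma diag k : (k < m.-1)%N ->
  \sum_(0 <= i < 2 ^ m) bil A (uk k i) (uk k i) =
  4 / (2 ^ k)%:R * \sum_(0 <= P < 2 ^ (m - k.+2)) qf A (haar R (2 ^ k) (2 * P)).
Proof.
move=> km.
have p0 : (0 < 2 ^ k)%N by rewrite expn_gt0.
have p4 : (0 < 4 * 2 ^ k)%N by rewrite muln_gt0.
have e : (2 ^ m = 2 ^ (m - k.+2) * (4 * 2 ^ k))%N.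
  by rewrite four_pow -expnD subnK //; lia.
have := sum_block (2 ^ (m - k.+2)) (4 * 2 ^ k) (fun i => bil A (uk k i) (uk k i)).
rewrite -e => ->; rewrite mulr_sumr; apply: eq_bigr => P _.
rewrite (@eq_big_nat _ _ _ 0 (4 * 2 ^ k) _ (fun _ => (2 ^ k)%:R^-1 ^+ 2 * qf A (haar R (2 ^ k) (2 * P)))).
  rewrite sumr_const_nat subn0 -(mulr_natr (_ * qf A _) (4 * 2 ^ k)) natrM.
  by field; rewrite pnatr_eq0 -lt0n.
move=> r /andP[_ Hr]; rewrite /uk bil_scal divS // /qf.
rewrite -[X in _ = X * _]mulr1 -(sg2 (odd ((P * (4 * 2 ^ k) + r) %/ (2 * 2 ^ k)))).
by rewrite expr2; ring.
Qed.

Lemma energy_expand :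
  \sum_(0 <= i < 2 ^ m) qf A (wv R m i) =
  \sum_(0 <= k < m.-1) \sum_(0 <= i < 2 ^ m) bil A (uk k i) (uk k i).
Proof.
have -> : \sum_(0 <= i < 2 ^ m) qf A (wv R m i) =
   \sum_(0 <= i < 2 ^ m) \sum_(0 <= k < m.-1) \sum_(0 <= k' < m.-1) bil A (uk k i) (uk k' i).
  apply: eq_bigr => i _.
  rewrite /qf (_ : wv R m i = fun j => \sum_(0 <= k < m.-1) uk k i j) // bil_suml.
  by apply: eq_bigr => k _; rewrite bil_sumr.
rewrite exchange_big_nat; apply: eq_big_nat => k /andP[_ Hk].
rewrite exchange_big_nat /=.
apply: (@sum_single _ _ k (fun k' => \sum_(0 <= i < 2 ^ m) bil A (uk k i) (uk k' i))) => // k' Hk' ne.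
case: (ltngtP k k') => [lt|gt|eq]; last by rewrite eq eqxx in ne.
  by rewrite cross.
by under eq_bigr => i _ do rewrite bil_sym //; rewrite cross.
Qed.

End Energy2.

Lemma haar_kernel (R : rcfType) B M j l : (0 < B)%N -> (j < M * (2 * B))%N ->
  \sum_(0 <= c < M) haar R B c j * haar R B c l =
  2 * ((j %/ B == l %/ B)%N : nat)%:R - ((j %/ (2 * B) == l %/ (2 * B))%N : nat)%:R.
Proof.
move=> B0 jM.
have aM : (j %/ (2 * B) < M)%N by rewrite ltn_divLR // muln_gt0.
rewrite (@eq_big_nat _ _ _ 0 M _ (fun c => if (j %/ (2 * B) == c)%N then
     (if (l %/ (2 * B) == c)%N then sg R (odd (j %/ B)) * sg R (odd (l %/ B)) else 0) else 0)); last first.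
  by move=> c _; rewrite /haar; case: eqP => _; case: eqP => _; rewrite ?mulr0 ?mul0r.
rewrite (sum_ind_eq (fun c => if (l %/ (2 * B) == c)%N then
     sg R (odd (j %/ B)) * sg R (odd (l %/ B)) else 0) aM).
rewrite !(mulnC 2 B) !divnMA !divn2.
case: eqP => [E|NE].
  rewrite E eqxx (half_eq (esym E)).
  by case: (odd (j %/ B)); case: (odd (l %/ B)); rewrite /sg /=; lra.
have -> : (j %/ B == l %/ B)%N = false.
  by apply/negbTE/eqP => E; apply: NE; rewrite E.
rewrite (_ : ((j %/ B)./2 == (l %/ B)./2)%N = false) ?mulr0 ?subr0 //.
by apply/negbTE/eqP => E; apply: NE; rewrite E.
Qed.


Lemma tele (R : rcfType) (f : nat -> R) M :
  \sum_(0 <= k < M) (f k - f k.+1) = f 0%N - f M.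
Proof.
elim: M => [|M IH]; first by rewrite big_geq // subrr.
by rewrite big_nat_recr //= IH; ring.
Qed.

Section Energy3.
Variables (R : rcfType) (m : nat) (A : 'M[R]_(2 ^ m)).
Hypothesis HA : posdef A.

Definition Hk k := \sum_(0 <= c < 2 ^ (m - k.+1)) qf A (haar R (2 ^ k) c).

Lemma Hk_ge0 k : 0 <= Hk k.
Proof. by apply: sumr_ge0 => c _; apply: qf_ge0. Qed.

Definition ek (k : nat) (j l : nat) : R := ((j %/ 2 ^ k == l %/ 2 ^ k)%N : nat)%:R / (2 ^ k)%:R.

Lemma Hk_kernel k : (k < m)%N ->
  Hk k / (2 * (2 ^ k)%:R) = \sum_(j < 2 ^ m) \sum_(l < 2 ^ m) A j l * (ek k j l - ek k.+1 j l).
Proof.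
move=> km; rewrite /Hk qf_sum_kernel mulr_suml; apply: eq_bigr => j _.
rewrite mulr_suml; apply: eq_bigr => l _.
have p0 : (0 < 2 ^ k)%N by rewrite expn_gt0.
rewrite haar_kernel //; last first.
  by rewrite two_pow -expnD subnK.
rewrite /ek two_pow -mulrA; congr (_ * _).
rewrite expnS natrM; field.
by rewrite pnatr_eq0 -lt0n.
Qed.

Lemma Hsum : \sum_(0 <= k < m) Hk k / (2 * (2 ^ k)%:R) = \tr A - qf A (fun _ => 1) / (2 ^ m)%:R.
Proof.
rewrite (@eq_big_nat _ _ _ 0 m _ (fun k => \sum_(j < 2 ^ m) \sum_(l < 2 ^ m) A j l * (ek k j l - ek k.+1 j l))); last first.
  by move=> k /andP[_ Hk]; rewrite Hk_kernel.
rewrite exchange_big /= /mxtrace /qf /bil mulr_suml -sumrB; apply: eq_bigr => j _.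
rewrite exchange_big /=.
under eq_bigr => l _ do rewrite -mulr_sumr tele.
have e0 : forall l : 'I_(2 ^ m), ek 0 j l = ((j == l) : nat)%:R.
  by move=> l; rewrite /ek expn0 !divn1 divr1.
have em : forall l : 'I_(2 ^ m), ek m j l = (2 ^ m)%:R^-1.
  by move=> l; rewrite /ek !divn_small ?ltn_ord // eqxx mul1r.
under eq_bigr => l _ do rewrite e0 em mulrBr.
rewrite sumrB -mulr_suml; congr (_ - _); last first.
  by congr (_ * _); apply: eq_bigr => l _; rewrite mul1r mulr1.
rewrite (bigD1 j) //= eqxx mulr1 big1 ?addr0 // => l ne.
rewrite (_ : (j == l) = false) ?mulr0 //; apply/negbTE; rewrite eq_sym //.
Qed.

Lemma halfsum k : (k < m.-1)%N ->
  \sum_(0 <= P < 2 ^ (m - k.+2)) qf A (haar R (2 ^ k) (2 * P)) <= Hk k.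
Proof.
move=> km; rewrite /Hk (_ : (2 ^ (m - k.+1) = 2 ^ (m - k.+2) * 2)%N); last first.
  by rewrite -expnSr; congr (2 ^ _)%N; lia.
rewrite sum_block; apply: ler_sum => P _.
rewrite big_nat_recr //= big_nat1 addn0 mulnC addn1.
by rewrite lerDl; apply: qf_ge0.
Qed.

Lemma energy : (1 < m)%N -> \sum_(0 <= i < 2 ^ m) qf A (wv R m i) <= 8 * \tr A.
Proof.
move=> m1.
rewrite energy_expand; last exact: HA.1.
rewrite (@eq_big_nat _ _ _ 0 m.-1 _ (fun k => 4 / (2 ^ k)%:R *
   \sum_(0 <= P < 2 ^ (m - k.+2)) qf A (haar R (2 ^ k) (2 * P)))); last first.
  by move=> k /andP[_ Hk]; rewrite diag //; exact: HA.1.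
apply: le_trans (_ : \sum_(0 <= k < m.-1) 4 / (2 ^ k)%:R * Hk k <= _).
  apply: ler_sum_nat => k /andP[_ Hk]; apply: ler_wpM2l; last exact: halfsum.
  by rewrite divr_ge0 // ler0n.
apply: le_trans (_ : \sum_(0 <= k < m) 4 / (2 ^ k)%:R * Hk k <= _).
  rewrite [X in _ <= X](big_cat_nat _ (n:=m.-1)) //=; last exact: leq_pred.
  rewrite lerDl; apply: sumr_ge0 => k _; apply: mulr_ge0; last exact: Hk_ge0.
  by rewrite divr_ge0 // ler0n.
have -> : \sum_(0 <= k < m) 4 / (2 ^ k)%:R * Hk k = 8 * \sum_(0 <= k < m) Hk k / (2 * (2 ^ k)%:R).
  rewrite mulr_sumr; apply: eq_bigr => k _; field.
  by rewrite pnatr_eq0 -lt0n expn_gt0.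
rewrite Hsum ler_pM2l // gerBl; apply: divr_ge0; [exact: qf_ge0 | exact: ler0n].
Qed.

End Energy3.

End File3.

Section File4.
Local Open Scope ring_scope.

Lemma part1 (R : rcfType) m (A : 'M[R]_(2 ^ m)) : (2 <= m)%N -> posdef A ->
  (512 : R)^-1 * (2 ^ m * m ^ 2)%N%:R <= \tr A * maxquad A.
Proof.
move=> m2 HA.
have n0 : (0 < 2 ^ m)%N by rewrite expn_gt0.
have := core HA (w := wv R m) n0 (K := 8) (ltr0Sn _ 7) (energy HA m2).
rewrite Stot // => H.
have e4 : (2 ^ m = 4 * 2 ^ (m - 2))%N.
  by rewrite (_ : 4 = 2 ^ 2)%N // -expnD subnKC.
set p := (2 ^ (m - 2))%N in e4 *.
set T := \tr A * maxquad A in H *.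
rewrite e4 in H *.
have p0 : (0 < p)%N by rewrite expn_gt0.
have hm : (m <= 2 * m.-1)%N by lia.
have hm' : (m%:R : R) <= 2 * (m.-1)%:R by rewrite -natrM ler_nat.
have hm0 : (0 : R) <= m%:R by [].
have H2 : (m%:R : R) ^+ 2 <= 4 * (m.-1)%:R ^+ 2.
  have -> : (4 : R) * (m.-1)%:R ^+ 2 = (2 * (m.-1)%:R) ^+ 2 by ring.
  by rewrite ler_pXn2r // ?nnegrE // (le_trans hm0 hm').
move: H; rewrite !natrM !natrX.
set P := (2 : R) ^+ (m - 2); set M := (m%:R : R); set M1 := ((m.-1)%:R : R).
have P0 : 0 < P by rewrite exprn_gt0.
move=> H.
have H3 : M1 ^+ 2 * P ^+ 2 <= 32 * P * T by move: H; rewrite !exprMn; lra.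
have H4 : M1 ^+ 2 * P <= 32 * T.
  rewrite -(ler_pM2r P0).
  have E1 : M1 ^+ 2 * P * P = M1 ^+ 2 * P ^+ 2 by ring.
  have E2 : 32 * T * P = 32 * P * T by ring.
  by rewrite E1 E2.
have H5 : P * M ^+ 2 <= P * (4 * M1 ^+ 2) by rewrite ler_pM2l.
rewrite mulrC ler_pdivrMr //.
have -> : 4 * P * (M * M) = 4 * (P * M ^+ 2) by ring.
lra.
Qed.

End File4.

Section File5.

Lemma levelP i j k : (level i j <= k) = (i %/ 2 ^ k == j %/ 2 ^ k).
Proof.
rewrite /level; case: ex_minnP => l Hl Hmin; apply/idP/idP.
  move=> lk; rewrite -(subnKC lk) expnD !divnMA; by rewrite (eqP Hl).
exact: Hmin.
Qed.

Lemma level_sym i j : level i j = level j i.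
Proof.
apply/eqP; rewrite eqn_leq !levelP; apply/andP; split; rewrite eq_sym -levelP //.
Qed.

Lemma count_ge l M : \sum_(0 <= k < M) (l <= k) = M - l.
Proof.
elim: M => [|M IH]; first by rewrite big_geq.
rewrite big_nat_recr //= IH; case: (leqP l M) => H /=; lia.
Qed.

Lemma level_le m i j : i < 2 ^ m -> j < 2 ^ m -> level i j <= m.
Proof. by move=> Hi Hj; rewrite levelP !divn_small. Qed.

Lemma ptw J Q : ((J < Q) : nat) = (J %/ 2 < Q %/ 2) + odd Q * (J == Q.-1).
Proof.
move: (odd_double_half J) (odd_double_half Q); rewrite -!divn2.
case: (odd J); case: (odd Q) => /= hJ hQ;
case: ltnP => h1; case: ltnP => h2; case: eqP => h3 /=; lia.
Qed.

Local Open Scope ring_scope.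

Lemma cs_sum (R : rcfType) M (d : nat -> R) :
  (\sum_(0 <= k < M) d k) ^+ 2 <= M%:R * \sum_(0 <= k < M) d k ^+ 2.
Proof.
have H : 0 <= \sum_(0 <= k < M) \sum_(0 <= k' < M) (d k - d k') ^+ 2.
  by apply: sumr_ge0 => k _; apply: sumr_ge0 => k' _; rewrite sqr_ge0.
have E : \sum_(0 <= k < M) \sum_(0 <= k' < M) (d k - d k') ^+ 2 =
   \sum_(0 <= k < M) \sum_(0 <= k' < M) d k ^+ 2 + \sum_(0 <= k < M) \sum_(0 <= k' < M) d k' ^+ 2
   - 2 * \sum_(0 <= k < M) \sum_(0 <= k' < M) d k * d k'.
  rewrite mulr_sumr -big_split -sumrB; apply: eq_bigr => k _.
  rewrite mulr_sumr -big_split -sumrB; apply: eq_bigr => k' _.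
  have sq : forall a b : R, (a - b) ^+ 2 = a ^+ 2 + b ^+ 2 - 2 * (a * b) by move=> a b; ring.
  by rewrite sq.
have E1 : \sum_(0 <= k < M) \sum_(0 <= k' < M) d k ^+ 2 = M%:R * \sum_(0 <= k < M) d k ^+ 2.
  rewrite mulr_sumr; apply: eq_bigr => k _; by rewrite sumr_const_nat subn0 mulr_natl.
have E2 : \sum_(0 <= k < M) \sum_(0 <= k' < M) d k' ^+ 2 = M%:R * \sum_(0 <= k < M) d k ^+ 2.
  by rewrite sumr_const_nat subn0 mulr_natl.
have E3 : \sum_(0 <= k < M) \sum_(0 <= k' < M) d k * d k' = (\sum_(0 <= k < M) d k) ^+ 2.
  by rewrite expr2 mulr_suml; apply: eq_bigr => k _; rewrite mulr_sumr.
move: H; rewrite E E1 E2 E3; lra.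
Qed.

Lemma entry_sum (R : rcfType) m i j : (i < 2 ^ m)%N -> (j < 2 ^ m)%N ->
  ((m - level i j)%N%:R : R) = \sum_(0 <= k < m) (((i %/ 2 ^ k == j %/ 2 ^ k)%N : nat)%:R : R).
Proof.
move=> Hi Hj; rewrite -count_ge natr_sum; apply: eq_bigr => k _.
by rewrite levelP.
Qed.

Lemma quadE (R : rcfType) n (A : 'M[R]_n) (X : 'cV[R]_n) :
  (X^T *m A *m X) 0 0 = \sum_(j < n) \sum_(l < n) X j 0 * A j l * X l 0.
Proof.
rewrite mxE exchange_big; apply: eq_bigr => l _.
rewrite !mxE big_distrl /=; apply: eq_bigr => j _.
by rewrite !mxE.
Qed.

Lemma sum_ge_term (R : rcfType) N i (f : nat -> R) : (i < N)%N -> (forall b, 0 <= f b) ->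
  f i <= \sum_(0 <= b < N) f b.
Proof.
move=> Hi H; rewrite big_mkord (bigD1 (Ordinal Hi)) //= lerDl.
by apply: sumr_ge0 => b _.
Qed.

Section Tree.
Variables (R : rcfType) (m : nat).
Local Notation n := (2 ^ m)%N.
Local Notation TM := (treeMatrix R n).

Lemma lgE : lg n = m.
Proof. by rewrite /lg trunc_expnK. Qed.

Lemma TM_entry (i j : 'I_n) : TM i j = \sum_(0 <= k < m) (((i %/ 2 ^ k == j %/ 2 ^ k)%N : nat)%:R : R).
Proof. by rewrite mxE lgE entry_sum. Qed.

Definition bs (g : 'I_n -> R) k b := \sum_(j < n) (((j %/ 2 ^ k == b)%N : nat)%:R : R) * g j.

Lemma ind_sum a c : (a < n)%N ->
  \sum_(0 <= b < n) (((a == b)%N : nat)%:R : R) * ((c == b)%N : nat)%:R = ((a == c)%N : nat)%:R.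
Proof.
move=> Ha; rewrite eq_sym -(sum_ind_eq (fun b => ((c == b)%N : nat)%:R : R) Ha).
apply: eq_bigr => b _; case: eqP => _; by rewrite ?mul1r ?mul0r.
Qed.

Lemma TM_quad (g : 'I_n -> R) :
  \sum_(j < n) \sum_(l < n) g j * TM j l * g l =
  \sum_(0 <= k < m) \sum_(0 <= b < n) (bs g k b) ^+ 2.
Proof.
have -> : \sum_(j < n) \sum_(l < n) g j * TM j l * g l =
    \sum_(0 <= k < m) \sum_(j < n) \sum_(l < n) g j * (((j %/ 2 ^ k == l %/ 2 ^ k)%N : nat)%:R : R) * g l.
  under eq_bigr => j _ do under eq_bigr => l _ do rewrite TM_entry mulr_sumr mulr_suml.
  under eq_bigr => j _ do rewrite exchange_big /=.
  by rewrite exchange_big.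
apply: eq_bigr => k _.
have sq : forall b, (bs g k b) ^+ 2 = \sum_(j < n) \sum_(l < n)
   (((j %/ 2 ^ k == b)%N : nat)%:R : R) * ((l %/ 2 ^ k == b)%N : nat)%:R * (g j * g l).
  move=> b; rewrite expr2 /bs mulr_suml; apply: eq_bigr => j _.
  by rewrite mulr_sumr; apply: eq_bigr => l _; ring.
rewrite (eq_bigr _ (fun b _ => sq b)).
rewrite [RHS]exchange_big /=; apply: eq_bigr => j _.
rewrite [RHS]exchange_big /=; apply: eq_bigr => l _.
have jn : (j %/ 2 ^ k < n)%N by apply: leq_ltn_trans (leq_div _ _) (ltn_ord j).
by rewrite -mulr_suml ind_sum //; ring.
Qed.

Lemma bs0 (g : 'I_n -> R) (i : 'I_n) : bs g 0 i = g i.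
Proof.
rewrite /bs (bigD1 i) //= expn0 divn1 eqxx mul1r big1 ?addr0 // => j ne.
rewrite divn1 (_ : (j == i :> nat) = false) ?mul0r //.
by apply/negbTE.
Qed.

Lemma TM_sym : TM^T = TM.
Proof. by apply/matrixP => i j; rewrite !mxE level_sym. Qed.

Lemma TM_posdef : (0 < m)%N -> posdef TM.
Proof.
move=> m0; split; first exact: TM_sym.
move=> X nz; rewrite quadE TM_quad.
have [i Hi] : exists i, X i 0 != 0.
  apply/existsP; move: nz; apply: contraR; rewrite negb_exists => /forallP H.
  by apply/eqP/matrixP => i j; rewrite (ord1 j) mxE; apply/eqP/negPn.
apply: lt_le_trans (sum_ge_term (f := fun k => \sum_(0 <= b < n) bs (fun j => X j 0) k b ^+ 2) m0 _).
  apply: lt_le_trans (sum_ge_term (f := fun b => bs (fun j => X j 0) 0 b ^+ 2) (ltn_ord i) _).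
    by rewrite /= bs0 lt0r sqr_ge0 andbT sqrf_eq0.
  by move=> b; rewrite sqr_ge0.
by move=> k; apply: sumr_ge0 => b _; rewrite sqr_ge0.
Qed.

Section Prefix.
Variables (g : 'I_n -> R) (p : nat).
Hypotheses (p0 : (0 < p)%N) (pn : (p <= n)%N).

Definition Tk k := \sum_(j < n) (((j %/ 2 ^ k < p %/ 2 ^ k)%N : nat)%:R : R) * g j.

Lemma Tk_diff k : Tk k - Tk k.+1 = ((odd (p %/ 2 ^ k)) : nat)%:R * bs g k (p %/ 2 ^ k).-1.
Proof.
rewrite /Tk -sumrB /bs mulr_sumr; apply: eq_bigr => j _.
rewrite expnSr !divnMA ptw natrD natrM; ring.
Qed.

Lemma dk_bound k : (Tk k - Tk k.+1) ^+ 2 <= \sum_(0 <= b < n) bs g k b ^+ 2.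
Proof.
rewrite Tk_diff; case Ho: (odd (p %/ 2 ^ k)) => /=.
  rewrite mul1r; apply: (sum_ge_term (f := fun b => bs g k b ^+ 2)) => [|b]; last by rewrite sqr_ge0.
  have : (p %/ 2 ^ k <= p)%N by apply: leq_div.
  move: pn.
  have : (0 < p %/ 2 ^ k)%N by case: (p %/ 2 ^ k)%N Ho.
  lia.
by rewrite mul0r expr0n /=; apply: sumr_ge0 => b _; rewrite sqr_ge0.
Qed.

Lemma prefix_bound : (2 <= m)%N ->
  (\sum_(j < n) (((j < p)%N : nat)%:R : R) * g j) ^+ 2 <=
  m%:R * \sum_(0 <= k < m) \sum_(0 <= b < n) (bs g k b) ^+ 2.
Proof.
move=> m2.
have T0 : Tk 0 = \sum_(j < n) (((j < p)%N : nat)%:R : R) * g j.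
  by rewrite /Tk; apply: eq_bigr => j _; rewrite expn0 !divn1.
case: (ltnP p n) => [pn'|pn'].
  have Tm : Tk m = 0.
    by rewrite /Tk big1 // => j _; rewrite (divn_small pn') ltn0 mul0r.
  have -> : \sum_(j < n) (((j < p)%N : nat)%:R : R) * g j = \sum_(0 <= k < m) (Tk k - Tk k.+1).
    by rewrite tele Tm subr0 T0.
  apply: le_trans (cs_sum _ _) _; apply: ler_wpM2l => //.
  by apply: ler_sum_nat => k _; apply: dk_bound.
have pE : p = n by apply/eqP; rewrite eqn_leq pn pn'.
have E : \sum_(j < n) (((j < p)%N : nat)%:R : R) * g j = bs g m.-1 0 + bs g m.-1 1.
  rewrite /bs -big_split /=; apply: eq_bigr => j _.
  have : (j %/ 2 ^ m.-1 < 2)%N.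
    rewrite ltn_divLR ?expn_gt0 // -expnS prednK; last lia.
    exact: ltn_ord.
  rewrite pE ltn_ord; case: (j %/ 2 ^ m.-1)%N => [|[|q]] //= _; ring.
rewrite E.
set a := bs g m.-1 0; set b := bs g m.-1 1.
have H1 : (a + b) ^+ 2 <= m%:R * (a ^+ 2 + b ^+ 2).
  have : (2 : R) <= m%:R by rewrite (ler_nat R 2 m).
  have : 0 <= (a - b) ^+ 2 by rewrite sqr_ge0.
  have : 0 <= a ^+ 2 + b ^+ 2 by rewrite addr_ge0 ?sqr_ge0.
  nra.
apply: le_trans H1 _; apply: ler_wpM2l => //.
have H2 : a ^+ 2 + b ^+ 2 <= \sum_(0 <= c < n) bs g m.-1 c ^+ 2.
  have n2 : (2 <= n)%N by rewrite -[2%N]/(2 ^ 1)%N leq_exp2l //; lia.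
  rewrite big_ltn; last lia.
  rewrite big_ltn //; rewrite addrA lerDl.
  by apply: sumr_ge0 => c _; rewrite sqr_ge0.
apply: le_trans H2 _.
apply: (sum_ge_term (f := fun k => \sum_(0 <= c < n) bs g k c ^+ 2)) => [|k]; first lia.
by apply: sumr_ge0 => c _; rewrite sqr_ge0.
Qed.

End Prefix.

End Tree.

Section Part2.
Variables (R : rcfType) (m : nat).
Hypothesis m2 : (2 <= m)%N.
Local Notation n := (2 ^ m)%N.
Local Notation TM := (treeMatrix R n).

Lemma quad_le (p : nat) : (0 < p)%N -> (p <= n)%N ->
  ((vvec R n p)^T *m invmx TM *m vvec R n p) 0 0 <= m%:R.
Proof.
move=> p0 pn.
have HA : posdef TM by apply: TM_posdef; lia.
set v := vvec R n p; set Z := invmx TM *m v.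
have AZ : TM *m Z = v by rewrite /Z mulmxA mulmxV ?mul1mx // posdef_unit.
set q := (v^T *m invmx TM *m v) 0 0.
have qE : q = (Z^T *m v) 0 0 by rewrite -tr11 trmx_mul trmxK /q /Z mulmxA.
have qE2 : q = (Z^T *m TM *m Z) 0 0 by rewrite -mulmxA AZ qE.
have qS : q = \sum_(j < n) (((j < p)%N : nat)%:R : R) * Z j 0.
  rewrite qE mxE; apply: eq_bigr => j _; rewrite !mxE mulrC.
  by case: (j < p)%N.
have qQ : q = \sum_(0 <= k < m) \sum_(0 <= b < n) (bs (fun j => Z j 0) k b) ^+ 2.
  by rewrite qE2 quadE TM_quad.
have := prefix_bound (fun j => Z j 0) p0 pn m2.
rewrite -qS -qQ => H.
have M0 : (0 : R) <= m%:R by [].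
nra.
Qed.

Lemma level_diag i : level i i = 0%N.
Proof. by apply/eqP; rewrite -leqn0 levelP. Qed.

Lemma tr_TM : \tr TM = (n * m)%N%:R.
Proof.
rewrite /mxtrace (eq_bigr (fun _ => (m%:R : R))); last first.
  by move=> i _; rewrite mxE level_diag lgE subn0.
by rewrite sumr_const card_ord -(mulr_natl (m%:R : R) n) -natrM.
Qed.

Lemma maxquad_TM : maxquad TM <= m%:R.
Proof.
rewrite /maxquad; elim/big_ind: _ => //.
  by move=> x y Hx Hy; rewrite ge_max Hx Hy.
by move=> i _; apply: quad_le => //; apply: ltn_ord.
Qed.

Lemma part2 : \tr TM * maxquad TM <= (n * lg n ^ 2)%N%:R.
Proof.
rewrite tr_TM lgE; apply: le_trans (_ : (n * m)%N%:R * m%:R <= _).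
  by apply: ler_wpM2l => //; apply: maxquad_TM.
by rewrite -natrM -mulnA.
Qed.

End Part2.

End File5.

Local Open Scope ring_scope.

Lemma ge2 k : (4 <= 2 ^ k)%N -> (2 <= k)%N.
Proof. by case: k => [|[|k]]. Qed.

Theorem corollary3p3 :
  (exists c : rat, 0 < c /\
     forall (R : rcfType) (n : nat) (A : 'M[R]_n),
       (exists m : nat, n = (4 ^ m)%N) -> (4 <= n)%N -> posdef A ->
       ratr c * (n * lg n ^ 2)%N%:R <= \tr A * maxquad A)
  /\
  (forall (R : rcfType) (n : nat),
       (exists m : nat, n = (2 ^ m)%N) -> (4 <= n)%N ->
       \tr (treeMatrix R n) * maxquad (treeMatrix R n) <= (n * lg n ^ 2)%N%:R).
Proof.
split.
  exists (512%:R : rat)^-1; split; first by rewrite invr_gt0 ltr0n.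
  move=> R n A [m' En] n4 HA; subst n.
  have e : (4 ^ m' = 2 ^ (m'.*2))%N by rewrite -mul2n expnM.
  move: A HA n4; rewrite e => A HA n4.
  have m2 : (2 <= m'.*2)%N by apply: ge2.
  have -> : ratr ((512%:R : rat)^-1) = (512 : R)^-1 by rewrite fmorphV rmorph_nat.
  rewrite lgE.
  exact: part1.
move=> R n [m ->] n4.
have m2 : (2 <= m)%N by apply: ge2.
exact: part2.
Qed.
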